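(* Let $(X,\rho)$ be a complete, unbounded hyperbolic metric space and let $\omega:[0,+\infty)\to[0,+\infty)$ be a continuous, subadditive, nonzero and nondecreasing function with $\omega(0)=0$. Let $\mathcal{C}^{\mathrm{b}}_\omega(X)=\{f\in\mathcal{C}_\omega(X): \sup_{x,y\in X}\rho(f(x),f(y))<+\infty\}$ be endowed with the metric $d_\infty(f,g)=\sup_{x\in X}\rho(f(x),g(x))$. Then there is a $\sigma$-lower porous set $\mathcal{M}\subset\mathcal{C}^{\mathrm{b}}_\omega(X)$ such that for every $f\in\mathcal{C}^{\mathrm{b}}_\omega(X)\setminus\mathcal{M}$ one has $\omega_f(s)<\omega(s)$ for every $s\in(0,+\infty)$.
   Context: A metric space $(X,\rho)$ has a coherent system of geodesics $\Gamma$ if $\Gamma$ is a family of isometries $\gamma:[0,\rho(x,y)]\to X$ with $\gamma(0)=x$, $\gamma(\rho(x,y))=y$ such that: (1) for all $x,y$ there is a unique $\gamma\in\Gamma$ from $x$ to $y$; (2) if $\gamma\in\Gamma$ goes from $x$ to $y$, then $t\mapsto\gamma(\rho(x,y)-t)$ is the element of $\Gamma$ from $y$ to $x$; (3) if $\gamma\in\Gamma$ goes from $x$ to $y$ and $0\le t_1\le t_2\le\rho(x,y)$, then $t\mapsto\gamma(t+t_1)$ on $[0,t_2-t_1]$ is the element of $\Gamma$ from $\gamma(t_1)$ to $\gamma(t_2)$. Write $(1-t)x\oplus ty=\gamma(t\rho(x,y))$ with $\gamma\in\Gamma$ from $x$ to $y$. $X$ is hyperbolic if $\rho((1-t)x\oplus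 ty,(1-t)x\oplus tz)\le t\rho(y,z)$ for all $x,y,z\in X$, $t\in[0,1]$. The modulus of continuity of $f:X\to X$ is $\omega_f(s)=\sup\{\rho(f(x),f(y)):\rho(x,y)\le s\}$, and $\mathcal{C}_\omega(X)$ is the set of maps $f:X\to X$ with $\omega_f\le\omega$. In a metric space $(Y,d)$, a set $P$ is lower porous at $x\in Y$ if there are $\epsilon_0>0$, $\alpha>0$ such that for every $\epsilon\in(0,\epsilon_0]$ there is $y\in Y$ with $B(y,\alpha\epsilon)\subseteq B(x,\epsilon)\setminus P$ (open balls); $P$ is lower porous if it is lower porous at every $x\in Y$, and $\sigma$-lower porous if it is a countable union of lower porous sets. *)

(* Defs.v *)
From Stdlib Require Import Reals.
From Coquelicot Require Import Coquelicot.
Open Scope R_scope.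

Section Defs.
Context {X : Type} (rho : X -> X -> R).

Definition is_metric : Prop :=
  (forall x y, 0 <= rho x y) /\ (forall x y, rho x y = 0 <-> x = y) /\
  (forall x y, rho x y = rho y x) /\
  (forall x y z, rho x z <= rho x y + rho y z).

Definition complete_metric : Prop :=
  forall u : nat -> X,
    (forall eps, 0 < eps -> exists N, forall m n, (N <= m)%nat -> (N <= n)%nat ->
        rho (u m) (u n) < eps) ->
    exists l, forall eps, 0 < eps -> exists N, forall n, (N <= n)%nat -> rho (u n) l < eps.

Definition unbounded_metric : Prop := forall B : R, exists x y, B < rho x y.

(* A coherent system of geodesics: G x y is the unique element of Gamma from x to y,
   regarded as a map on [0, rho x y] (values outside that interval are irrelevant). *)
Definition coherent_geodesics (G : X -> X -> R -> X) : Prop :=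
  (forall x y s t, 0 <= s <= rho x y -> 0 <= t <= rho x y ->
     rho (G x y s) (G x y t) = Rabs (s - t)) /\
  (forall x y, G x y 0 = x /\ G x y (rho x y) = y) /\
  (forall x y t, 0 <= t <= rho x y -> G y x t = G x y (rho x y - t)) /\
  (forall x y t1 t2 t, 0 <= t1 -> t1 <= t2 -> t2 <= rho x y -> 0 <= t <= t2 - t1 ->
     G (G x y t1) (G x y t2) t = G x y (t + t1)).

Definition geo_comb (G : X -> X -> R -> X) (t : R) (x y : X) : X := G x y (t * rho x y).

Definition hyperbolic_with (G : X -> X -> R -> X) : Prop :=
  coherent_geodesics G /\
  forall x y z t, 0 <= t <= 1 ->
    rho (geo_comb G t x y) (geo_comb G t x z) <= t * rho y z.

Definition modulus (f : X -> X) (s : R) : Rbar :=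
  Lub_Rbar (fun r => exists x y, rho x y <= s /\ r = rho (f x) (f y)).

Definition C_omega (omega : R -> R) (f : X -> X) : Prop :=
  forall s, 0 <= s -> Rbar_le (modulus f s) (Finite (omega s)).

Definition Cb_omega (omega : R -> R) (f : X -> X) : Prop :=
  C_omega omega f /\ exists B : R, forall x y, rho (f x) (f y) <= B.

Definition d_inf (f g : X -> X) : R :=
  real (Lub_Rbar (fun r => exists x, r = rho (f x) (g x))).

End Defs.

(* Porosity in the metric space (S, d), where S is a predicate carving the space
   out of an ambient type T; balls are open balls of S. *)
Section Porosity.
Context {T : Type} (S : T -> Prop) (d : T -> T -> R).

Definition lower_porous_at (P : T -> Prop) (x : T) : Prop :=
  exists eps0 alpha, 0 < eps0 /\ 0 < alpha /\
    forall eps, 0 < eps <= eps0 ->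
      exists y, S y /\ forall z, S z -> d y z < alpha * eps -> d x z < eps /\ ~ P z.

Definition lower_porous (P : T -> Prop) : Prop :=
  forall x, S x -> lower_porous_at P x.

Definition sigma_lower_porous (P : T -> Prop) : Prop :=
  exists Q : nat -> T -> Prop,
    (forall n, lower_porous (Q n)) /\ (forall z, P z <-> exists n, Q n z).
End Porosity.

Definition admissible_omega (omega : R -> R) : Prop :=
  (forall s, 0 <= s -> 0 <= omega s) /\
  (forall s, 0 <= s -> forall eps, 0 < eps -> exists delta, 0 < delta /\
      forall t, 0 <= t -> Rabs (t - s) < delta -> Rabs (omega t - omega s) < eps) /\
  (forall s t, 0 <= s -> 0 <= t -> omega (s + t) <= omega s + omega t) /\
  (exists s, 0 <= s /\ omega s <> 0) /\
  (forall s t, 0 <= s -> s <= t -> omega s <= omega t) /\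
  omega 0 = 0.

(* Main.v *)
Require Import Defs.
From Stdlib Require Import Reals Lra Classical.
From Coquelicot Require Import Coquelicot.
Open Scope R_scope.

Lemma lub_elem (E : R -> Prop) r : E r -> Rbar_le r (Lub_Rbar E).
Proof. intro H. destruct (Lub_Rbar_correct E) as [ub _]. exact (ub r H). Qed.

Lemma lub_le (E : R -> Prop) c : (forall r, E r -> r <= c) -> Rbar_le (Lub_Rbar E) (Finite c).
Proof. intro H. destruct (Lub_Rbar_correct E) as [_ lub]. apply lub. intros r Hr. exact (H r Hr). Qed.

Lemma lub_fin (E : R -> Prop) r0 c : E r0 -> (forall r, E r -> r <= c) ->
  real (Lub_Rbar E) <= c /\ forall r, E r -> r <= real (Lub_Rbar E).
Proof.
  intros H0 H. pose proof (lub_le E c H) as H1. pose proof (lub_elem E r0 H0) as H2.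
  destruct (Lub_Rbar E) as [l| |] eqn:Hl; simpl in *; try contradiction.
  split; [exact H1|]. intros r Hr. pose proof (lub_elem E r Hr) as H3. rewrite Hl in H3. exact H3.
Qed.


Lemma cb_pt (X : Type) (rho : X -> X -> R) omega f x y :
  is_metric rho -> Cb_omega rho omega f -> rho (f x) (f y) <= omega (rho x y).
Proof.
  intros [Hnn _] [Cf _].
  pose proof (Cf (rho x y) (Hnn x y)) as H1.
  assert (H2 : Rbar_le (rho (f x) (f y)) (modulus rho f (rho x y))).
  { apply lub_elem. exists x, y. split; [lra|reflexivity]. }
  exact (Rbar_le_trans _ _ _ H2 H1).
Qed.

Lemma cb_pair (X : Type) (rho : X -> X -> R) omega f g (x0 : X) :
  is_metric rho -> Cb_omega rho omega f -> Cb_omega rho omega g ->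
  exists c, forall x, rho (f x) (g x) <= c.
Proof.
  intros [Hnn [Hz [Hs Ht]]] [_ [Bf HBf]] [_ [Bg HBg]].
  exists (Bf + rho (f x0) (g x0) + Bg). intro x.
  pose proof (Ht (f x) (f x0) (g x)). pose proof (Ht (f x0) (g x0) (g x)).
  pose proof (HBf x x0). pose proof (HBg x0 x). lra.
Qed.

Lemma dinf_props (X : Type) (rho : X -> X -> R) f g (x0 : X) c :
  (forall x, rho (f x) (g x) <= c) ->
  d_inf rho f g <= c /\ forall x, rho (f x) (g x) <= d_inf rho f g.
Proof.
  intro H. unfold d_inf.
  destruct (lub_fin (fun r => exists x, r = rho (f x) (g x)) (rho (f x0) (g x0)) c)
    as [H1 H2].
  - exists x0; reflexivity.
  - intros r [x ->]. apply H.
  - split; [exact H1|]. intro x. apply H2. exists x; reflexivity.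
Qed.

Lemma dinf_ge (X : Type) (rho : X -> X -> R) omega f g (x0 : X) :
  is_metric rho -> Cb_omega rho omega f -> Cb_omega rho omega g ->
  forall x, rho (f x) (g x) <= d_inf rho f g.
Proof.
  intros Hm Hf Hg. destruct (cb_pair X rho omega f g x0 Hm Hf Hg) as [c Hc].
  exact (proj2 (dinf_props X rho f g x0 c Hc)).
Qed.

Lemma omega_pos omega : admissible_omega omega -> forall s, 0 < s -> 0 < omega s.
Proof.
  intros [Hnn [_ [Hsub [[s0 [Hs0 Hne]] [Hmon H0]]]]] a Ha.
  destruct (Rle_lt_or_eq_dec 0 (omega a) (Hnn a (Rlt_le _ _ Ha))) as [h|h]; [exact h|].
  exfalso. apply Hne.
  assert (Hk : forall k, omega (INR k * a) <= 0).
  { induction k.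
    - simpl. rewrite Rmult_0_l, H0. lra.
    - rewrite S_INR. replace ((INR k + 1) * a) with (INR k * a + a) by ring.
      pose proof (pos_INR k).
      pose proof (Hsub (INR k * a) a ltac:(nra) ltac:(lra)). lra. }
  destruct (INR_unbounded (s0 / a)) as [k Hk'].
  assert (s0 <= INR k * a).
  { assert (s0 / a * a = s0) by (field; lra).
    apply Rlt_le. nra. }
  pose proof (Hmon s0 (INR k * a) Hs0 H). pose proof (Hk k). pose proof (Hnn s0 Hs0). lra.
Qed.

Lemma geo_iso (X : Type) (rho : X -> X -> R) G t a z :
  is_metric rho -> hyperbolic_with rho G -> 0 <= t <= 1 ->
  rho a (geo_comb rho G t a z) = t * rho a z.
Proof.
  intros [Hnn _] [[Hiso [Hend _]] _] Ht. unfold geo_comb.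
  destruct (Hend a z) as [E0 _].
  pose proof (Hnn a z).
  rewrite <- E0 at 1. rewrite E0.
  rewrite <- (proj1 (Hend a z)) at 1.
  rewrite Hiso; [|lra|nra].
  rewrite Rabs_left1; nra.
Qed.

Lemma geo_contr (X : Type) (rho : X -> X -> R) G t a b z :
  is_metric rho -> hyperbolic_with rho G -> 0 <= t <= 1 ->
  rho (geo_comb rho G t a z) (geo_comb rho G t b z) <= (1 - t) * rho a b.
Proof.
  intros [Hnn [_ [Hs _]]] [[_ [_ [Hrev _]]] Hhyp] Ht.
  assert (E : forall a', geo_comb rho G t a' z = geo_comb rho G (1 - t) z a').
  { intro a'. unfold geo_comb. rewrite (Hs a' z).
    pose proof (Hnn z a').
    rewrite (Hrev z a' (t * rho z a')); [|nra]. f_equal; ring. }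
  rewrite !E. apply Hhyp. lra.
Qed.

Definition Mset (X : Type) (rho : X -> X -> R) omega (n : nat) (f : X -> X) : Prop :=
  Cb_omega rho omega f /\
  exists s, / (INR n + 1) <= s /\ ~ Rbar_lt (modulus rho f s) (Finite (omega s)).

Lemma porous_n (X : Type) (rho : X -> X -> R) G omega (x0 : X) :
  is_metric rho -> hyperbolic_with rho G -> admissible_omega omega ->
  forall n, lower_porous (Cb_omega rho omega) (d_inf rho) (Mset X rho omega n).
Proof.
  intros Hm Hh Ho n f Sf.
  pose proof Hm as [Hnn [Hz [Hs Htr]]].
  pose proof Sf as [Cf [B HB]].
  assert (Hrr : forall x, rho x x = 0) by (intro x; apply Hz; reflexivity).
  assert (HB0 : 0 <= B) by (pose proof (HB x0 x0); rewrite Hrr in *; lra).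
  set (z := f x0).
  set (w := omega (/ (INR n + 1))).
  assert (Hn1 : 0 < / (INR n + 1)) by (apply Rinv_0_lt_compat; pose proof (pos_INR n); lra).
  assert (hw : 0 < w) by (apply omega_pos; auto).
  set (K := B + 1).
  assert (HK : 0 < K) by (unfold K; lra).
  set (alpha := Rmin (1/2) (w / (8 * K))).
  assert (Ha1 : alpha <= 1/2) by apply Rmin_l.
  assert (Ha2 : alpha <= w / (8 * K)) by apply Rmin_r.
  assert (Ha0 : 0 < alpha).
  { apply Rmin_pos; [lra|]. apply Rdiv_lt_0_compat; lra. }
  exists K, alpha. split; [exact HK|]. split; [exact Ha0|].
  intros eps [He1 He2].
  set (t := eps / (2 * K)).
  assert (Ht0 : 0 < t) by (apply Rdiv_lt_0_compat; lra).
  assert (HtK : t * (2 * K) = eps) by (unfold t; field; lra).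
  assert (Ht1 : t <= 1) by nra.
  set (g := fun x => geo_comb rho G t (f x) z).
  assert (HA : forall x, rho (f x) (g x) = t * rho (f x) z)
    by (intro x; apply geo_iso; auto; lra).
  assert (HC : forall x y, rho (g x) (g y) <= (1 - t) * rho (f x) (f y))
    by (intros x y; apply geo_contr; auto; lra).
  assert (Sg : Cb_omega rho omega g).
  { split.
    - intros s Hs0. apply lub_le. intros r [x [y [Hxy ->]]].
      pose proof (HC x y). pose proof (Hnn (f x) (f y)).
      pose proof (cb_pt X rho omega f x y Hm Sf).
      pose proof (proj1 (proj2 (proj2 (proj2 (proj2 Ho)))) _ _ (Hnn x y) Hxy). nra.
    - exists B. intros x y. pose proof (HC x y). pose proof (Hnn (f x) (f y)).
      pose proof (HB x y). nra. }
  assert (Dfg : d_inf rho f g <= t * B).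
  { assert (Hb : forall x, rho (f x) (g x) <= t * B).
    { intro x. rewrite HA. pose proof (HB x x0). fold z in H. pose proof (Hnn (f x) z). nra. }
    exact (proj1 (dinf_props X rho f g x0 (t * B) Hb)). }
  exists g. split; [exact Sg|]. intros h Sh Hgh.
  pose proof (dinf_ge X rho omega f g x0 Hm Sf Sg) as Efg.
  pose proof (dinf_ge X rho omega g h x0 Hm Sg Sh) as Egh.
  split.
  - assert (d_inf rho f h <= d_inf rho f g + d_inf rho g h).
    { assert (Hb : forall x, rho (f x) (h x) <= d_inf rho f g + d_inf rho g h).
      { intro x. pose proof (Htr (f x) (g x) (h x)). pose proof (Efg x). pose proof (Egh x). lra. }
      exact (proj1 (dinf_props X rho f h x0 _ Hb)). }
    assert (HKd : K = B + 1) by reflexivity.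
    assert (t * B < eps / 2) by nra. assert (alpha * eps <= eps / 2) by nra. lra.
  - intros [_ [s [Hs1 Hns]]]. apply Hns.
    assert (Hs0 : 0 <= s) by lra.
    assert (Hws : w <= omega s) by (apply (proj1 (proj2 (proj2 (proj2 (proj2 Ho))))); lra).
    apply Rbar_le_lt_trans with (Finite (2 * d_inf rho g h + (1 - t) * omega s)).
    + apply lub_le. intros r [x [y [Hxy ->]]].
      pose proof (Htr (h x) (g x) (h y)). pose proof (Htr (g x) (g y) (h y)).
      rewrite (Hs (h x) (g x)) in *. pose proof (Egh x). pose proof (Egh y).
      pose proof (HC x y). pose proof (cb_pt X rho omega f x y Hm Sf).
      pose proof (proj1 (proj2 (proj2 (proj2 (proj2 Ho)))) _ _ (Hnn x y) Hxy).
      pose proof (Hnn (f x) (f y)). nra.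
    + simpl.
      assert (alpha * 8 * K <= w).
      { assert (w / (8 * K) * (8 * K) = w) by (field; lra). nra. }
      assert (2 * d_inf rho g h < 2 * alpha * eps) by lra.
      assert (t * w <= t * omega s) by nra.
      assert (t * w * (2 * K) = eps * w) by (rewrite <- HtK; ring).
      nra.
Qed.

Theorem theorem4p1 (X : Type) (rho : X -> X -> R) (G : X -> X -> R -> X)
  (omega : R -> R) :
  is_metric rho -> complete_metric rho -> unbounded_metric rho ->
  hyperbolic_with rho G -> admissible_omega omega ->
  exists M : (X -> X) -> Prop,
    (forall f, M f -> Cb_omega rho omega f) /\
    sigma_lower_porous (Cb_omega rho omega) (d_inf rho) M /\
    forall f, Cb_omega rho omega f -> ~ M f ->
      forall s, 0 < s -> Rbar_lt (modulus rho f s) (Finite (omega s)).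
Proof.
  intros Hm _ Hu Hh Ho.
  destruct (Hu 0) as [x0 _].
  exists (fun f => exists n, Mset X rho omega n f).
  split; [intros f [n [H _]]; exact H|].
  split.
  - exists (Mset X rho omega). split.
    + intro n. apply (porous_n X rho G omega x0); auto.
    + intro z. tauto.
  - intros f Sf HM s Hs.
    destruct (INR_unbounded (/ s)) as [n Hn].
    apply NNPP. intro Hc. apply HM. exists n. split; [exact Sf|].
    exists s. split; [|exact Hc].
    pose proof (pos_INR n).
    rewrite <- (Rinv_inv s). apply Rlt_le. apply Rinv_lt_contravar.
    + apply Rmult_lt_0_compat; [apply Rinv_0_lt_compat; lra| lra].
    + lra.
Qed.
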